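(* In every approval-based SCV instance, every committee satisfying SW-JR also satisfies weak-SW-JR. Conversely, there exist an approval-based SCV instance and a committee that satisfies weak-SW-JR but not SW-JR.
   Context: An approval-based sub-committee voting (SCV) instance consists of a set of voters $N=\{1,\ldots,n\}$, a finite set of candidates $C$ partitioned into candidate subsets $C_1,\ldots,C_\ell$, positive integer quotas $k_j\le |C_j|$ with $k=\sum_{j=1}^\ell k_j$, and approval ballots $A_i\subseteq C$ for $i\in N$. A committee is a set $W\subseteq C$ with $|W\cap C_j|=k_j$ for every $j$. $W$ satisfies SW-JR if for every $X\subseteq N$ with $|X|\ge n/k$ and $|\bigcap_{i\in X}A_i|\ge 1$ we have $|W\cap \bigcup_{i\in X}A_i|\ge 1$. $W$ satisfies weak-SW-JR if for every $X\subseteq N$ with $|X|\ge n/k$ and $|(\bigcap_{i\in X}A_i)\cap C_j|\ge 1$ for all $j=1,\ldots,\ell$ we have $|W\cap \bigcup_{i\in X}A_i|\ge 1$. *)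

(* Defs.v *)
From mathcomp Require Import all_boot all_order all_algebra.
Set Implicit Arguments. Unset Strict Implicit. Unset Printing Implicit Defensive.
Import Order.TTheory GRing.Theory Num.Theory.

(* An approval-based SCV instance:
   - voters: the finite type V (N = V, n = #|V|),
   - candidates: the finite type C,
   - partition of C into C_1..C_l given by part : C -> 'I_l
     (C_j = [set c | part c == j]),
   - quotas q : 'I_l -> nat,
   - approval ballots A : V -> {set C}. *)

Definition subc (C : finType) (l : nat) (part : C -> 'I_l) (j : 'I_l) : {set C} :=
  [set c | part c == j].

Definition ktot (l : nat) (q : 'I_l -> nat) : nat := \sum_(j < l) q j.

Definition scv_instance (V C : finType) (l : nat) (part : C -> 'I_l)
  (q : 'I_l -> nat) (A : V -> {set C}) : Prop :=
  (0 < #|V|)%N /\ (0 < l)%N /\ forall j : 'I_l, (0 < q j)%N /\ (q j <= #|subc part j|)%N.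

Definition committee (C : finType) (l : nat) (part : C -> 'I_l)
  (q : 'I_l -> nat) (W : {set C}) : Prop :=
  forall j : 'I_l, #|W :&: subc part j| = q j.

Definition large (V : finType) (l : nat) (q : 'I_l -> nat) (X : {set V}) : Prop :=
  ((#|V|%:R / (ktot q)%:R : rat) <= #|X|%:R)%R.

Definition SW_JR (V C : finType) (l : nat) (part : C -> 'I_l)
  (q : 'I_l -> nat) (A : V -> {set C}) (W : {set C}) : Prop :=
  forall X : {set V}, large q X ->
    (1 <= #|\bigcap_(i in X) A i|)%N ->
    (1 <= #|W :&: \bigcup_(i in X) A i|)%N.

Definition weak_SW_JR (V C : finType) (l : nat) (part : C -> 'I_l)
  (q : 'I_l -> nat) (A : V -> {set C}) (W : {set C}) : Prop :=
  forall X : {set V}, large q X ->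
    (forall j : 'I_l, 1 <= #|(\bigcap_(i in X) A i) :&: subc part j|)%N ->
    (1 <= #|W :&: \bigcup_(i in X) A i|)%N.

(* Main.v *)
Require Import Defs.
From mathcomp Require Import all_boot all_order all_algebra.
Import Order.TTheory GRing.Theory Num.Theory.

Definition ex_part (c : 'I_3) : 'I_2 := if val c == 2%N then ord_max else ord0.
Definition ex_q (j : 'I_2) : nat := 1.
Definition ex_A (v : unit) : {set 'I_3} := [set ord0].
Definition ex_W : {set 'I_3} := [set c | val c != 0%N].

Theorem mainTheorem3 :
  (forall (V C : finType) (l : nat) (part : C -> 'I_l) (q : 'I_l -> nat)
          (A : V -> {set C}) (W : {set C}),
      scv_instance part q A -> committee part q W ->
      SW_JR part q A W -> weak_SW_JR part q A W) /\
  (exists (V C : finType) (l : nat) (part : C -> 'I_l) (q : 'I_l -> nat)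
          (A : V -> {set C}) (W : {set C}),
      [/\ scv_instance part q A, committee part q W,
          weak_SW_JR part q A W & ~ SW_JR part q A W]).
Proof.
split.
  move=> V C l part q A W [_ [l0 _]] _ HSW X HX Hj.
  apply: HSW => //.
  have := Hj (Ordinal l0).
  rewrite !card_gt0; case/set0Pn => x; rewrite inE => /andP [Hx _].
  by apply/set0Pn; exists x.
exists unit, ('I_3 : finType), 2, ex_part, ex_q, ex_A, ex_W.
split.
- split; first by rewrite card_unit.
  split; first by [].
  move=> j; split => //.
  rewrite /ex_q /subc; case: j => [[|[|]]] //= ?.
  + by rewrite card_gt0; apply/set0Pn; exists ord0; rewrite inE.
  + by rewrite card_gt0; apply/set0Pn; exists ord_max; rewrite inE.
- move=> j; rewrite /ex_q /subc.
  apply/eqP; rewrite eqn_leq; apply/andP; split.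
  + rewrite leqNgt; apply/negP => /card_gt1P [x [y [Hx Hy Hxy]]].
    move: Hx Hy Hxy; rewrite !inE /ex_part.
    case: x => [[|[|[|]]]] //= ?; case: y => [[|[|[|]]]] //= ?; by move=> /eqP <-.
  + case: j => [[|[|]]] //= ?.
    * rewrite card_gt0; apply/set0Pn; exists (Ordinal (isT : 1 < 3)%N).
      by rewrite !inE.
    * rewrite card_gt0; apply/set0Pn; exists ord_max; rewrite !inE.
      by apply/eqP; apply: val_inj.
- move=> X HX Hj.
  exfalso.
  case: (boolP (tt \in X)) => Ht.
  + have := Hj ord_max.
    rewrite card_gt0; case/set0Pn => x; rewrite !inE => /andP [/bigcapP Hx].
    have := Hx tt Ht; rewrite /ex_A inE => /eqP -> .
    by rewrite /ex_part /=.
  + have X0 : X = set0.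
      by apply/setP => -[]; rewrite inE (negbTE Ht).
    move: HX; rewrite /large X0 cards0 card_unit /ktot big_ord_recr big_ord1 /ex_q /=.
    by [].
- move=> /(_ [set: unit]).
  have -> : \bigcap_(i in [set: unit]) ex_A i = [set ord0].
    by rewrite (big_pred1 tt) // => -[]; rewrite !inE.
  have -> : \bigcup_(i in [set: unit]) ex_A i = [set ord0].
    by rewrite (big_pred1 tt) // => -[]; rewrite !inE.
  move=> H.
  have L : large ex_q [set: unit].
    by rewrite /large cardsT card_unit /ktot big_ord_recr big_ord1 /ex_q /=.
  have := H L; rewrite cards1 => /(_ isT).
  rewrite card_gt0; case/set0Pn => x; rewrite !inE => /andP [H1 /eqP Hx].
  by move: H1; rewrite Hx.
Qed.
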